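(* Let $\alpha,\beta$ be propositional formulas. If $\alpha\mathbin{|\!\sim}_{ow}\beta$, then there is a formula $\gamma$ with $V(\gamma)\subseteq V(\alpha)\cap V(\beta)$ such that $\alpha\mathbin{|\!\sim}_{ow}\gamma$ and $\gamma\vdash\beta$ in $\mathbf{HT}$.
   Context: $V(\varphi)$ is the set of atoms of $\varphi$. Here-and-there logic $\mathbf{HT}(V)$ over atom set $V$: interpretations are pairs $\langle H,T\rangle$, $H\subseteq T\subseteq V$, viewed as two-world Kripke models ($h\le t$; atoms true at $h$: $H$, at $t$: $T$) with intuitionistic Kripke clauses, $\neg\varphi:=\varphi\to\bot$; $\mathcal M\models\varphi$ iff $\varphi$ true at both worlds; $\Pi\vdash\varphi$ iff every $\mathbf{HT}$-model of $\Pi$ is a model of $\varphi$. An equilibrium model of $\Pi$ over $V$ is a model $\langle T,T\rangle$ of $\Pi$ in $\mathbf{HT}(V)$ with no model $\langle H,T\rangle$ of $\Pi$ with $H\subsetneq T$; $E_V(\Pi)$ is the set of these. Open-world equilibrium entailment: if $\Pi$ is non-empty and has equilibrium models, $\Pi\mathbin{|\!\sim}_{ow}\varphi$ iff $\mathcal M\models\varphi$ for every $\mathbf{HT}(V(\Pi)\cup V(\varphi))$-interpretation $\mathcal M$ whose restriction to $V(\Pi)$ belongs to $E_{V(\Pi)}(\Pi)$ (i.e., atoms outside $V(\Pi)$ are interpreted arbitrarily, with $H\subseteq T$); otherwise $\Pi\mathbin{|\!\sim}_{ow}\varphi$ iff $\Pi\vdash\varphi$. A formula $\alpha$ is identified with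 $\{\alpha\}$. *)

(* Defs.v *)
From Stdlib Require Import List.
Import ListNotations.

Inductive form : Type :=
  | Atom : nat -> form
  | Bot : form
  | And : form -> form -> form
  | Or : form -> form -> form
  | Imp : form -> form -> form.

Definition Neg (f : form) : form := Imp f Bot.
Definition Top : form := Imp Bot Bot.

Fixpoint vars (f : form) : list nat :=
  match f with
  | Atom p => [p]
  | Bot => []
  | And a b | Or a b | Imp a b => vars a ++ vars b
  end.

Definition atoms := nat -> Prop.

Fixpoint sat_t (T : atoms) (f : form) : Prop :=
  match f with
  | Atom p => T p
  | Bot => False
  | And a b => sat_t T a /\ sat_t T b
  | Or a b => sat_t T a \/ sat_t T b
  | Imp a b => sat_t T a -> sat_t T b
  end.

(* Truth at the "here" world h of the Kripke model <H,T>, h <= t. *)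
Fixpoint sat_h (H T : atoms) (f : form) : Prop :=
  match f with
  | Atom p => H p
  | Bot => False
  | And a b => sat_h H T a /\ sat_h H T b
  | Or a b => sat_h H T a \/ sat_h H T b
  | Imp a b => (sat_h H T a -> sat_h H T b) /\ (sat_t T a -> sat_t T b)
  end.

Definition models (H T : atoms) (f : form) : Prop := sat_h H T f /\ sat_t T f.

Definition subset (A B : atoms) : Prop := forall p, A p -> B p.

(* Satisfaction only depends on atoms of the formulas, so quantifying over all
   interpretations over the full atom set nat is the same as quantifying over
   HT(V) for any V ⊇ V(a) ∪ V(f). *)
Definition entails (a f : form) : Prop :=
  forall H T : atoms, subset H T -> models H T a -> models H T f.

Definition eq_model (V : list nat) (a : form) (T : atoms) : Prop :=
  subset T (fun p => In p V) /\
  models T T a /\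
  ~ (exists H : atoms, subset H T /\ (exists p, T p /\ ~ H p) /\ models H T a).

Definition has_eq_model (a : form) : Prop := exists T, eq_model (vars a) a T.

Definition ow_entails (a f : form) : Prop :=
  (has_eq_model a ->
     forall H T : atoms,
       subset H T ->
       subset T (fun p => In p (vars a) \/ In p (vars f)) ->
       (* the restriction <H ∩ V(a), T ∩ V(a)> belongs to E_{V(a)}(a) *)
       (forall p, In p (vars a) -> (H p <-> T p)) ->
       eq_model (vars a) a (fun p => T p /\ In p (vars a)) ->
       models H T f) /\
  (~ has_eq_model a -> entails a f).

(* Main.v *)
Require Import Defs.
From Stdlib Require Import List Classical Arith PeanoNat.
Import ListNotations.

Definition agree (A B : atoms) (l : list nat) := forall p, In p l -> (A p <-> B p).

Lemma agree_app_l A B l1 l2 : agree A B (l1 ++ l2) -> agree A B l1.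
Proof. intros h p hp; apply h, in_or_app; auto. Qed.
Lemma agree_app_r A B l1 l2 : agree A B (l1 ++ l2) -> agree A B l2.
Proof. intros h p hp; apply h, in_or_app; auto. Qed.

Lemma loc f : forall H T H' T', agree H H' (vars f) -> agree T T' (vars f) ->
  (sat_h H T f <-> sat_h H' T' f) /\ (sat_t T f <-> sat_t T' f).
Proof.
  induction f; intros H T H' T' h1 h2; simpl in *.
  - split; [apply h1|apply h2]; simpl; auto.
  - tauto.
  - destruct (IHf1 H T H' T' (agree_app_l _ _ _ _ h1) (agree_app_l _ _ _ _ h2)).
    destruct (IHf2 H T H' T' (agree_app_r _ _ _ _ h1) (agree_app_r _ _ _ _ h2)). tauto.
  - destruct (IHf1 H T H' T' (agree_app_l _ _ _ _ h1) (agree_app_l _ _ _ _ h2)).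
    destruct (IHf2 H T H' T' (agree_app_r _ _ _ _ h1) (agree_app_r _ _ _ _ h2)). tauto.
  - destruct (IHf1 H T H' T' (agree_app_l _ _ _ _ h1) (agree_app_l _ _ _ _ h2)).
    destruct (IHf2 H T H' T' (agree_app_r _ _ _ _ h1) (agree_app_r _ _ _ _ h2)). tauto.
Qed.

Lemma loc_models f H T H' T' : agree H H' (vars f) -> agree T T' (vars f) ->
  models H T f -> models H' T' f.
Proof. intros h1 h2; destruct (loc f H T H' T' h1 h2); unfold models; tauto. Qed.

Lemma pers f : forall H T, subset H T -> sat_h H T f -> sat_t T f.
Proof.
  induction f; intros H T hs; simpl; try tauto.
  - apply hs.
  - intros [x y]; split; eauto.
  - intros [x|y]; eauto.
Qed.

Lemma hTT f : forall T, sat_h T T f <-> sat_t T f.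
Proof.
  induction f; intros T; simpl; try tauto.
  - rewrite IHf1, IHf2; tauto.
  - rewrite IHf1, IHf2; tauto.
  - rewrite IHf1, IHf2; tauto.
Qed.

Lemma models_h f H T : subset H T -> (models H T f <-> sat_h H T f).
Proof. intros hs; unfold models; split; [tauto|]; intros h; split; eauto using pers. Qed.

Definition conjL (l : list form) := fold_right And Top l.
Definition disjL (l : list form) := fold_right Or Bot l.

Lemma conjL_sat H T l : sat_h H T (conjL l) <-> forall f, In f l -> sat_h H T f.
Proof.
  induction l; simpl.
  - split; [tauto|]; intros; split; tauto.
  - rewrite IHl; split.
    + intros [x y] f [<-|hf]; auto.
    + intros h; split; auto.
Qed.

Lemma disjL_sat H T l : sat_h H T (disjL l) <-> exists f, In f l /\ sat_h H T f.
Proof.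
  induction l; simpl.
  - split; [tauto|]; intros [f [[] _]].
  - rewrite IHl; split.
    + intros [x|[f [h1 h2]]]; eauto.
    + intros [f [[<-|h1] h2]]; eauto.
Qed.

Lemma conjL_vars l p : In p (vars (conjL l)) -> exists f, In f l /\ In p (vars f).
Proof.
  induction l; simpl; [tauto|]. intros h; apply in_app_or in h; destruct h as [h|h]; eauto.
  destruct (IHl h) as [f [? ?]]; eauto.
Qed.

Lemma disjL_vars l p : In p (vars (disjL l)) -> exists f, In f l /\ In p (vars f).
Proof.
  induction l; simpl; [tauto|]. intros h; apply in_app_or in h; destruct h as [h|h]; eauto.
  destruct (IHl h) as [f [? ?]]; eauto.
Qed.

Fixpoint subs (l : list nat) : list (list nat) :=
  match l with
  | [] => [[]]
  | x :: l' => map (cons x) (subs l') ++ subs l'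
  end.

Lemma subs_ex (P : nat -> Prop) X : exists s, In s (subs X) /\
  (forall p, In p s -> In p X) /\ (forall p, In p X -> (In p s <-> P p)).
Proof.
  induction X as [|x l IH]; simpl.
  - exists []; split; [auto|]; split; tauto.
  - destruct IH as [s [h1 [h2 h3]]]. destruct (classic (P x)) as [hx|hx].
    + exists (x :: s); split; [apply in_or_app; left; apply in_map; auto|].
      split.
      * intros p [<-|hp]; auto.
      * intros p [<-|hp]; simpl; [tauto|].
        destruct (Nat.eq_dec x p) as [<-|ne]; [tauto|]. rewrite <- h3 by auto. intuition.
    + exists s; split; [apply in_or_app; right; auto|]. split; [auto|].
      intros p [<-|hp]; [|auto]. split; [intros hs; exfalso; apply hx, (h3 x (h2 x hs)), hs| tauto].
Qed.

Lemma filter_ex {A} (Q : A -> Prop) (l : list A) : exists l', forall x, In x l' <-> In x l /\ Q x.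
Proof.
  induction l as [|y l [l' IH]].
  - exists []; simpl; tauto.
  - destruct (classic (Q y)).
    + exists (y :: l'); intros x; simpl; rewrite IH; split; [intros [<-|?]|intros [[<-|?] ?]]; tauto.
    + exists l'; intros x; simpl; rewrite IH; split; [tauto|]. intros [[<-|?] ?]; tauto.
Qed.

Definition ind := in_dec Nat.eq_dec.

Definition lit (h t : list nat) (p : nat) : form :=
  if ind p h then (if ind p t then Atom p else Neg (Atom p))
  else (if ind p t then Neg (Neg (Atom p)) else Neg (Atom p)).

Definition impf (h t : list nat) (pq : nat * nat) : form :=
  let (p, q) := pq in
  if ind p h then Top else if ind p t then
    (if ind q h then Top else if ind q t then Imp (Atom p) (Atom q) else Top) else Top.

Definition chi (X h t : list nat) : form :=
  And (conjL (map (lit h t) X)) (conjL (map (impf h t) (list_prod X X))).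

Lemma chi_vars X h t p : In p (vars (chi X h t)) -> In p X.
Proof.
  simpl; intros hp; apply in_app_or in hp; destruct hp as [hp|hp];
  apply conjL_vars in hp; destruct hp as [f [hf hpf]]; apply in_map_iff in hf;
  destruct hf as [x [<- hx]].
  - unfold lit in hpf; destruct (ind x h), (ind x t); simpl in hpf;
    intuition congruence.
  - destruct x as [u v]; apply in_prod_iff in hx. unfold impf in hpf.
    destruct (ind u h), (ind u t), (ind v h), (ind v t); simpl in hpf; intuition congruence.
Qed.

Lemma definable (X : list nat) (S : atoms -> atoms -> Prop) :
  (forall H T H' T', agree H H' X -> agree T T' X -> S H T -> S H' T') ->
  (forall H T, subset H T -> S H T -> S T T) ->
  exists g, (forall p, In p (vars g) -> In p X) /\
    forall H T, subset H T -> (models H T g <-> S H T).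
Proof.
  intros Sloc Spers.
  set (Q := fun ht : list nat * list nat =>
              S (fun p => In p (fst ht) /\ In p (snd ht)) (fun p => In p (snd ht))).
  destruct (filter_ex Q (list_prod (subs X) (subs X))) as [l' hl'].
  exists (disjL (map (fun ht => chi X (fst ht) (snd ht)) l')). split.
  - intros p hp; apply disjL_vars in hp; destruct hp as [f [hf hp]].
    apply in_map_iff in hf; destruct hf as [x [<- _]]; eapply chi_vars; eauto.
  - intros H T hs; rewrite models_h by auto; rewrite disjL_sat; split.
    + intros [f [hf hsat]]; apply in_map_iff in hf; destruct hf as [[h t] [<- hx]].
      apply hl' in hx; destruct hx as [_ hQ]; unfold Q in hQ; simpl in hQ.
      simpl in hsat; destruct hsat as [s1 s2]; rewrite conjL_sat in s1, s2.
      assert (c1 : forall p, In p X -> In p h -> In p t -> H p).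
      { intros p hp i1 i2; specialize (s1 (lit h t p) (in_map _ _ _ hp));
        unfold lit in s1; destruct (ind p h), (ind p t); simpl in s1; tauto. }
      assert (c2 : forall p, In p X -> (In p t <-> T p)).
      { intros p hp; specialize (s1 (lit h t p) (in_map _ _ _ hp));
        unfold lit in s1; destruct (ind p h), (ind p t); simpl in s1; split; intros; try tauto;
        first [apply hs; tauto | apply NNPP; tauto]. }
      assert (c4 : forall p q, In p X -> In q X -> ~ In p h -> In p t -> ~ In q h -> In q t ->
                      H p -> H q).
      { intros p q hp hq a1 a2 a3 a4.
        specialize (s2 (impf h t (p, q)) (in_map _ _ _ (proj2 (in_prod_iff _ _ _ _) (conj hp hq)))).
        unfold impf in s2; destruct (ind p h), (ind p t), (ind q h), (ind q t); simpl in s2; tauto. }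
      destruct (classic (exists p, In p X /\ ~ In p h /\ In p t /\ H p)) as [[p [hp [a1 [a2 a3]]]]|hn].
      * apply (Sloc (fun p => In p t) (fun p => In p t)).
        -- intros q hq; rewrite (c2 q hq); split; [|intros hh; apply hs, hh].
           intros hTq. apply c2 in hTq as hqt; auto. destruct (ind q h) as [qh|qh]; eauto.
        -- intros q hq; apply c2; auto.
        -- apply (Spers (fun p => In p h /\ In p t)); [intros q; tauto| auto].
      * apply (Sloc (fun p => In p h /\ In p t) (fun p => In p t)); [| |auto].
        -- intros q hq; split; [intros [i1 i2]; eauto|].
           intros hH. assert (In q t) by (apply c2; auto).
           destruct (ind q h); [tauto|]. exfalso; apply hn; eauto 6.
        -- intros q hq; apply c2; auto.
    + intros hS.
      destruct (subs_ex H X) as [h [hh1 [_ hh3]]].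
      destruct (subs_ex T X) as [t [ht1 [_ ht3]]].
      exists (chi X h t); split.
      * apply in_map_iff; exists (h, t); split; [auto|]. apply hl'; split.
        -- apply in_prod; auto.
        -- unfold Q; simpl. apply (Sloc H T); auto.
           ++ intros q hq; rewrite (hh3 q hq), (ht3 q hq); split; [|tauto].
              intros x; split; auto.
           ++ intros q hq; rewrite (ht3 q hq); tauto.
      * simpl; split; rewrite conjL_sat.
        -- intros f hf; apply in_map_iff in hf; destruct hf as [q [<- hq]].
           specialize (hh3 q hq); specialize (ht3 q hq); specialize (hs q).
           unfold lit; destruct (ind q h), (ind q t); simpl; tauto.
        -- intros f hf; apply in_map_iff in hf; destruct hf as [[p q] [<- hpq]].
           apply in_prod_iff in hpq; destruct hpq as [hp hq].
           specialize (hh3 p hp) as e1; specialize (ht3 p hp) as e2;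
           specialize (hh3 q hq) as e3; specialize (ht3 q hq) as e4.
           unfold impf; destruct (ind p h), (ind p t), (ind q h), (ind q t); simpl; tauto.
Qed.

Lemma eq_model_ext V a T1 T2 : eq_model V a T1 -> (forall p, T1 p <-> T2 p) -> eq_model V a T2.
Proof.
  intros [e1 [e2 e3]] hx. assert (ag : forall l, agree T1 T2 l) by (intros l p _; auto).
  split; [intros p hp; apply e1, hx, hp|]. split.
  - eapply loc_models; [apply ag|apply ag|exact e2].
  - intros [H [hs [[p [p1 p2]] hm]]]. apply e3. exists H; split; [intros q hq; apply hx, hs, hq|].
    split; [exists p; split; [apply hx|]; auto|].
    eapply loc_models; [intros q _; reflexivity| intros q _; symmetry; apply hx| exact hm].
Qed.

Theorem proposition5 (a b : form) :
  ow_entails a b ->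
  exists g : form,
    (forall p, In p (vars g) -> In p (vars a) /\ In p (vars b)) /\
    ow_entails a g /\ entails g b.
Proof.
  intros [hab1 hab2].
  set (X := filter (fun p => if ind p (vars a) then true else false) (vars b)).
  assert (hX : forall p, In p X <-> In p (vars a) /\ In p (vars b)).
  { intros p; unfold X; rewrite filter_In; destruct (ind p (vars a)); intuition congruence. }
  set (mix := fun A B : atoms => fun p => if ind p (vars a) then A p else
                                   if ind p (vars b) then B p else False).
  assert (mixa : forall A B, agree (mix A B) A (vars a)).
  { intros A B p hp; unfold mix; destruct (ind p (vars a)); tauto. }
  assert (mixb : forall A B, agree A B X -> agree (mix A B) B (vars b)).
  { intros A B hag p hp; unfold mix; destruct (ind p (vars a)) as [i|i].
    - apply hag, hX; auto.
    - destruct (ind p (vars b)); tauto. }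
  assert (mixs : forall A B C D, subset A C -> subset B D -> subset (mix A B) (mix C D)).
  { intros A B C D h1 h2 p; unfold mix; destruct (ind p (vars a)), (ind p (vars b)); auto. }
  set (S := fun H T : atoms =>
    (forall H' T', subset H' T' -> agree H H' X -> agree T T' X -> models H' T' b) /\
    (forall H' T', subset H' T' -> agree T H' X -> agree T T' X -> models H' T' b)).
  destruct (definable X S) as [g [gv gs]].
  - intros H T H' T' h1 h2 [s1 s2]; split; intros H'' T'' hs u1 u2.
    + apply s1; auto; intros p hp; [rewrite (h1 p hp); apply u1, hp | rewrite (h2 p hp); apply u2, hp].
    + apply s2; auto; intros p hp; rewrite (h2 p hp); [apply u1, hp | apply u2, hp].
  - intros H T _ [s1 s2]; split; auto.
  - exists g; split; [intros p hp; apply hX, gv, hp|]. split.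
    + split.
      * intros he H T hs _ hHT heq. apply gs; auto.
        assert (key : forall H' T', subset H' T' -> agree T H' X -> agree T T' X -> models H' T' b).
        { intros H' T' hs' u1 u2.
          assert (m : models (mix T H') (mix T T') b).
          { apply hab1; auto.
            - apply mixs; [intros q; auto| exact hs'].
            - intros p; unfold mix; destruct (ind p (vars a)), (ind p (vars b)); tauto.
            - intros p hp; unfold mix; destruct (ind p (vars a)); tauto.
            - eapply eq_model_ext; [exact heq|]. intros p; unfold mix;
              destruct (ind p (vars a)); tauto. }
          eapply loc_models; [apply mixb, u1| apply mixb, u2| exact m]. }
        split; auto. intros H' T' hs' u1 u2; apply key; auto.
        intros p hp; rewrite <- (u1 p hp); symmetry; apply hHT, hX; auto.
      * intros hne; specialize (hab2 hne).
        assert (key : forall Hb Tb H' T', subset Hb Tb -> models Hb Tb a -> subset H' T' ->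
                   agree Hb H' X -> agree Tb T' X -> models H' T' b).
        { intros Hb Tb H' T' hb ma hs' u1 u2.
          assert (m : models (mix Hb H') (mix Tb T') b).
          { apply hab2; [apply mixs; auto|].
            eapply loc_models; [intros p hp; symmetry; apply mixa; auto
                              | intros p hp; symmetry; apply mixa; auto| exact ma]. }
          eapply loc_models; [apply mixb, u1| apply mixb, u2| exact m]. }
        intros H T hs ma; apply gs; auto. split.
        -- intros H' T' h1 h2 h3; exact (key H T H' T' hs ma h1 h2 h3).
        -- intros H' T' h1 h2 h3; apply (key T T H' T'); auto.
           ++ intros p; auto.
           ++ destruct ma as [_ mt]; split; [apply hTT|]; auto.
    + intros H T hs mg; apply gs in mg as [s1 _]; auto.
      apply s1; auto; intros p _; tauto.
Qed.
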